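(* Let $r$ and $k$ be odd positive integers such that $2^{\alpha}k\in G_r$ for all nonnegative integers $\alpha$, and let $k_1,k_2$ be relatively prime positive integers with $k_1k_2=k$. Then either $2^{\alpha}k_1\in G_r$ for all nonnegative integers $\alpha$, or $2^{\alpha}k_2\in G_r$ for all nonnegative integers $\alpha$.
   Context: For a positive integer $r$, the $r$-th Schemmel totient function $S_r:\mathbb{N}\to\mathbb{N}_0$ is the multiplicative arithmetic function (so $S_r(1)=1$ and $S_r(ab)=S_r(a)S_r(b)$ for coprime $a,b$) defined on prime powers by $S_r(p^{\alpha})=0$ if $p\le r$ and $S_r(p^\alpha)=p^{\alpha-1}(p-r)$ if $p>r$, for all primes $p$ and positive integers $\alpha$. $G_r$ denotes the set of positive integers not in the range of $S_r$. *)

(* Defs.v *)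
From mathcomp Require Import all_boot.
Set Implicit Arguments. Unset Strict Implicit. Unset Printing Implicit Defensive.

Definition schemmel (r n : nat) : nat :=
  \prod_(p <- primes n)
     (if p <= r then 0 else p ^ (logn p n).-1 * (p - r)).

Definition inG (r n : nat) : Prop :=
  0 < n /\ ~ (exists m, 0 < m /\ schemmel r m = n).

(* Main.v *)
Require Import Defs.
From mathcomp Require Import all_boot.

Definition hh (r p e : nat) := if 0 < e then (if p <= r then 0 else p ^ e.-1 * (p - r)) else 1.

Lemma schemE r n N : 0 < n -> n < N ->
  schemmel r n = \prod_(0 <= p < N) hh r p (logn p n).
Proof.
move=> n0 nN; rewrite /schemmel.
have -> : \prod_(0 <= p < N) hh r p (logn p n) =
   \prod_(p <- [seq p <- index_iota 0 N | p \in primes n]) hh r p (logn p n).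
  rewrite big_filter [RHS]big_mkcond /=; apply: eq_bigr => p _.
  by case: ifP => // /negbT; rewrite -logn_gt0 lt0n negbK => /eqP ->.
have -> : \prod_(p <- primes n) (if p <= r then 0 else p ^ (logn p n).-1 * (p - r))
   = \prod_(p <- primes n) hh r p (logn p n).
  by apply: eq_big_seq => p pP; rewrite /hh logn_gt0 pP.
apply: perm_big; apply: uniq_perm.
- exact: primes_uniq.
- by apply: filter_uniq; apply: iota_uniq.
move=> p; rewrite mem_filter mem_iota /= add0n.
case pP: (p \in primes n) => //=; symmetry.
move: pP; rewrite mem_primes => /and3P [_ _ d].
by rewrite subn0 (leq_ltn_trans (dvdn_leq n0 d) nN).
Qed.

Lemma keyM r m1 m2 : 0 < m1 -> 0 < m2 ->
  schemmel r (lcmn m1 m2) * schemmel r (gcdn m1 m2) = schemmel r m1 * schemmel r m2.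
Proof.
move=> h1 h2; set N := (m1 * m2).+1.
have b1 : m1 < N by rewrite ltnS leq_pmulr.
have b2 : m2 < N by rewrite ltnS leq_pmull.
have g0 : 0 < gcdn m1 m2 by rewrite gcdn_gt0 h1.
have l0 : 0 < lcmn m1 m2 by rewrite lcmn_gt0 h1 h2.
have bg : gcdn m1 m2 < N by apply: leq_ltn_trans b1; apply: dvdn_leq h1 (dvdn_gcdl _ _).
have bl : lcmn m1 m2 < N.
  rewrite ltnS -muln_lcm_gcd; exact: leq_pmulr.
rewrite (schemE r _ _ l0 bl) (schemE r _ _ g0 bg) (schemE r _ _ h1 b1) (schemE r _ _ h2 b2).
rewrite -!big_split /=; apply: eq_bigr => p _.
rewrite logn_lcm // logn_gcd // /maxn /minn.
by case: ltnP => _ //; rewrite mulnC.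
Qed.

Lemma keyD r m1 m2 : 0 < m1 -> 0 < m2 ->
  schemmel r (gcdn m1 m2) %| schemmel r m1.
Proof.
move=> h1 h2; set N := (m1 * m2).+1.
have b1 : m1 < N by rewrite ltnS leq_pmulr.
have g0 : 0 < gcdn m1 m2 by rewrite gcdn_gt0 h1.
have bg : gcdn m1 m2 < N by apply: leq_ltn_trans b1; apply: dvdn_leq h1 (dvdn_gcdl _ _).
rewrite (schemE r _ _ g0 bg) (schemE r _ _ h1 b1).
apply: (big_ind2 (fun x y => x %| y)) => //.
  by move=> x1 x2 y1 y2 d1 d2; apply: dvdn_mul.
move=> p _; rewrite logn_gcd // /hh.
case: (ltnP 0 (minn (logn p m1) (logn p m2))) => hm; last by rewrite dvd1n.
have e1 : 0 < logn p m1 by apply: leq_trans hm (geq_minl _ _).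
rewrite e1; case: (p <= r) => //.
apply: dvdn_mul => //; apply: dvdn_exp2l.
by rewrite -!subn1 leq_sub2r // geq_minl.
Qed.

From Stdlib Require Import Classical.

Theorem theorem3p4 (r k k1 k2 : nat) :
  0 < r -> odd r -> 0 < k -> odd k ->
  (forall a : nat, inG r (2 ^ a * k)) ->
  0 < k1 -> 0 < k2 -> coprime k1 k2 -> k1 * k2 = k ->
  (forall a : nat, inG r (2 ^ a * k1)) \/ (forall a : nat, inG r (2 ^ a * k2)).
Proof.
move=> r0 rodd k0 kodd HG k10 k20 cop ek.
case: (classic (forall a : nat, inG r (2 ^ a * k1))) => [H|H]; [by left|right].
move=> b; split; first by rewrite muln_gt0 expn_gt0 k20.
move=> [m2 [m20 e2]].
have [a Ha] := not_all_ex_not _ _ H.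
have [m1 [m10 e1]] : exists m, 0 < m /\ schemmel r m = 2 ^ a * k1.
  apply: NNPP => Hn; apply: Ha; split => //; by rewrite muln_gt0 expn_gt0 k10.
have hM := @keyM r m1 m2 m10 m20.
have d1 := @keyD r m1 m2 m10 m20.
have d2 := @keyD r m2 m1 m20 m10; rewrite gcdnC in d2.
rewrite e1 in d1; rewrite e2 in d2.
have ok1 : odd k1 by move: kodd; rewrite -ek oddM => /andP [].
have c1 : coprime (schemmel r (gcdn m1 m2)) k1.
  apply: (coprime_dvdl d2); rewrite coprimeMl; apply/andP; split.
    by apply: coprimeXl; rewrite coprime2n.
  by rewrite coprime_sym.
rewrite mulnC Gauss_dvdr // in d1.
case/(@dvdn_pfactor 2 _ _ isT): d1 => d dle eG.
have [_ HH] := HG (a + b - d).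
apply: HH; exists (lcmn m1 m2); split; first by rewrite lcmn_gt0 m10 m20.
rewrite eG e1 e2 in hM.
apply/eqP; rewrite -(@eqn_pmul2r (2 ^ d)) ?expn_gt0 //; apply/eqP; rewrite hM.
rewrite [RHS]mulnAC -expnD subnK; last by apply: leq_trans dle (leq_addr _ _).
by rewrite -ek expnD mulnACA.
Qed.
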